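(* In the setting of the context, suppose that $\rho:=\rho_{\mathcal A_\nu,\mathcal S_{\log},\pi_{\log}}$ is quasi-convex and lower semicontinuous with respect to $\tau_{\log}$. Then for all $X\in\mathcal C$, $$\eta_{\mathfrak R}(X)=\sup_{\varphi\in\mathcal D}\ \inf\big\{\pi(Z):\ Z\in\mathcal S,\ W\in\mathcal B_{\tilde\rho},\ \varphi(W)\ge\varphi(X)-\varphi(Z)\big\},$$ where $\mathcal D$ is the set of all log-linear $\tau$-continuous maps $\varphi\colon\mathcal C\to\mathbb R$ (and $\inf\emptyset=\infty$).
   Context: Probability space $(\Omega,\mathcal F,P)$; $L^0_{++}$ = a.s. strictly positive random variables; $L^\infty_{++}=L^\infty\cap L^0_{++}$; $\frac{\mathcal A}{\mathcal D}=\{AD^{-1}\}$. Setting: nonempty $\mathcal C,\mathcal S,\mathcal K\subset L^0_{++}$ with $\frac{\mathcal C}{\mathcal S}\subset\mathcal K$, $\mathcal K$ a cone, $(\mathcal C,\cdot)$ a group, and (so that all expressions are defined) $\mathcal K\subset\mathcal C$ and $\mathcal S\subset\mathcal C$; pricing map $\pi\colon\mathcal S\to(0,\infty)$. $\mathcal C_{\log},\mathcal S_{\log},\mathcal K_{\log}$ are the images under $\log$. $\mathcal C_{\log}$ is equipped with a topology $\tau_{\log}$ making it a locally convex topological vector space; $\mathcal C$ carries $\tau=\{\exp(U):U\in\tau_{\log}\}$. A map $\varphi\colon\mathcal C\to\mathbb R$ is log-linear if $\varphi(X^\alpha Y^\beta)=\alpha\varphi(X)+\beta\varphi(Y)$ for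 $X,Y\in\mathcal C$, $\alpha,\beta\in\mathbb R$; the log-linear $\tau$-continuous maps are exactly $\psi\circ\log$ with $\psi$ in the topological dual of $\mathcal C_{\log}$. A return risk measure (RRM), with $L^\infty_{++}\subset\mathcal K$, is a positively homogeneous nondecreasing $\tilde\rho\colon\mathcal K\to(0,\infty)$ with $\tilde\rho(1)=1$; $\mathcal B_{\tilde\rho}=\{K\in\mathcal K:\tilde\rho(K)\le1\}$; $\mathfrak R=(\mathcal B_{\tilde\rho},\mathcal S,\pi)$; MARRM $\eta_{\mathfrak R}(X)=\inf\{\pi(Z):Z\in\mathcal S,\ X/Z\in\mathcal B_{\tilde\rho}\}$. Further $\nu=\log\circ\tilde\rho\circ\exp$, $\mathcal A_\nu=\{Y\in\mathcal K_{\log}:\nu(Y)\le0\}$, $\pi_{\log}=\log\circ\pi\circ\exp$ on $\mathcal S_{\log}$, and $\rho_{\mathcal A_\nu,\mathcal S_{\log},\pi_{\log}}(X_{\log})=\inf\{\pi_{\log}(L):L\in\mathcal S_{\log},\ X_{\log}-L\in\mathcal A_\nu\}$ on $\mathcal C_{\log}$. Quasi-convex: $\rho(\alpha Y_1+(1-\alpha)Y_2)\le\max\{\rho(Y_1),\rho(Y_2)\}$. Conventions $\exp(-\infty)=0$, $\exp(\infty)=\infty$. *)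

(* Defs.v *)
From HB Require Import structures.
From mathcomp Require Import all_boot all_order all_algebra generic_quotient.
From mathcomp Require Import all_classical all_reals all_analysis.
Set Implicit Arguments. Unset Strict Implicit. Unset Printing Implicit Defensive.
Import Order.TTheory GRing.Theory Num.Theory.
Import numFieldNormedType.Exports.
Local Open Scope classical_set_scope.
Local Open Scope quotient_scope.
Local Open Scope ring_scope.

(* L^0(Omega, F, P): classes of measurable real functions modulo P-a.s.     *)
(* equality (mathcomp-analysis' {mfun_ P, Omega >-> R}).  An element X is    *)
(* applied to an outcome w through a representative (coercion repr).        *)
Section L0.
Context d (Omega : measurableType d) (R : realType) (P : probability Omega R).

Definition L0 : Type := {mfun_ P, Omega >-> R}.
Definition evL0 (X : L0) : Omega -> R := aqEqMfun_to_fun X.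
Coercion evL0 : L0 >-> Funclass.

(* the class of a function f (only used for measurable f, where it is the   *)
(* class of f; for non-measurable f it is an irrelevant default)            *)
Definition liftL0 (f : Omega -> R) : L0 :=
  \pi_(L0) (insubd (cst 0 : {mfun Omega >-> R}) f).

Definition oneL0 : L0 := liftL0 (cst 1).
Definition mulL0 (X Y : L0) : L0 := liftL0 (fun w => X w * Y w).
Definition invL0 (X : L0) : L0 := liftL0 (fun w => (X w)^-1).
Definition divL0 (X Y : L0) : L0 := liftL0 (fun w => X w / Y w).
Definition sclL0 (a : R) (X : L0) : L0 := liftL0 (fun w => a * X w).
Definition subL0 (X Y : L0) : L0 := liftL0 (fun w => X w - Y w).
Definition lincombL0 (a : R) (Y1 : L0) (b : R) (Y2 : L0) : L0 :=
  liftL0 (fun w => a * Y1 w + b * Y2 w).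
Definition powmulL0 (X : L0) (a : R) (Y : L0) (b : R) : L0 :=
  liftL0 (fun w => X w `^ a * Y w `^ b).
Definition logL0 (X : L0) : L0 := liftL0 (fun w => ln (X w)).
Definition expL0 (Y : L0) : L0 := liftL0 (fun w => expR (Y w)).

Definition leL0 (X Y : L0) : Prop := {ae P, forall w, X w <= Y w}.

Definition L0pp : set L0 := [set X : L0 | {ae P, forall w, 0 < X w}].
Definition Linfpp : set L0 :=
  [set X : L0 | (exists M : R, {ae P, forall w, `|X w| <= M}) /\ L0pp X].

Definition mul_group (C : set L0) : Prop :=
  [/\ C oneL0,
      (forall X Y, C X -> C Y -> C (mulL0 X Y)) &
      (forall X, C X -> C (invL0 X))].

Definition is_cone (K : set L0) : Prop :=
  forall (a : R) X, 0 < a -> K X -> K (sclL0 a X).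

Definition setting (C S K : set L0) (pi : L0 -> R) : Prop :=
  [/\ [/\ C !=set0, S !=set0 & K !=set0],
      [/\ C `<=` L0pp, S `<=` L0pp & K `<=` L0pp],
      (forall X Z, C X -> S Z -> K (divL0 X Z)),
      [/\ is_cone K, mul_group C, K `<=` C & S `<=` C] &
      (forall Z, S Z -> 0 < pi Z)].

Definition RRM (K : set L0) (rt : L0 -> R) : Prop :=
  [/\ Linfpp `<=` K,
      (forall X, K X -> 0 < rt X),
      (forall (a : R) X, 0 < a -> K X -> rt (sclL0 a X) = a * rt X),
      (forall X Y, K X -> K Y -> leL0 X Y -> rt X <= rt Y) &
      rt oneL0 = 1].

Definition Bset (K : set L0) (rt : L0 -> R) : set L0 :=
  [set X | K X /\ rt X <= 1].

Local Open Scope ereal_scope.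

Definition MARRM (S : set L0) (pi : L0 -> R) (K : set L0) (rt : L0 -> R)
    (X : L0) : \bar R :=
  ereal_inf [set (pi Z)%:E | Z in [set Z | S Z /\ Bset K rt (divL0 X Z)]].

Definition logset (A : set L0) : set L0 := logL0 @` A.
Definition nu (rt : L0 -> R) (Y : L0) : R := ln (rt (expL0 Y)).
Definition Anu (K : set L0) (rt : L0 -> R) : set L0 :=
  [set Y | logset K Y /\ (nu rt Y <= 0)%R].
Definition pilog (pi : L0 -> R) (L : L0) : R := ln (pi (expL0 L)).
Definition rhoA (K : set L0) (rt : L0 -> R) (S : set L0) (pi : L0 -> R)
    (Xl : L0) : \bar R :=
  ereal_inf [set (pilog pi L)%:E |
             L in [set L | logset S L /\ Anu K rt (subL0 Xl L)]].

Local Close Scope ereal_scope.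

(* tau_log: C_log carries the topology of a locally convex tvs V, via a
   linear bijection iota : V -> C_log (pointwise linear structure) *)
Definition log_topology (C : set L0) (V : tvsType R) (iota : V -> L0) : Prop :=
  [/\ injective iota,
      range iota = logset C &
      (forall (a : R) (u v : V),
          iota (a *: u + v) = lincombL0 a (iota u) 1 (iota v))].

Definition quasi_convex_on (Clog : set L0) (rho : L0 -> \bar R) : Prop :=
  forall Y1 Y2 (a : R), Clog Y1 -> Clog Y2 -> 0 <= a <= 1 ->
    (rho (lincombL0 a Y1 (1 - a) Y2) <= maxe (rho Y1) (rho Y2))%E.

Definition log_linear (C : set L0) (phi : L0 -> R) : Prop :=
  forall X Y (a b : R), C X -> C Y ->
    phi (powmulL0 X a Y b) = a * phi X + b * phi Y.

(* D: log-linear tau-continuous maps C -> R, where tau = exp(tau_log), i.e.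
   phi is tau-continuous iff v |-> phi (exp (iota v)) is continuous on V *)
Definition Dset (C : set L0) (V : tvsType R) (iota : V -> L0) : set (L0 -> R) :=
  [set phi | log_linear C phi /\
             continuous (fun v : V => phi (expL0 (iota v)))].

End L0.

(* Main.v *)
Require Import Defs.
From HB Require Import structures.
From mathcomp Require Import all_boot all_order all_algebra generic_quotient.
From mathcomp Require Import all_classical all_reals all_analysis.
From mathcomp Require Import measurable_realfun ring lra.
Import Order.TTheory GRing.Theory Num.Theory.
Import numFieldNormedType.Exports.
Local Open Scope classical_set_scope.
Local Open Scope ring_scope.

Module Helpers.
Set Implicit Arguments. Unset Strict Implicit. Unset Printing Implicit Defensive.
Local Open Scope quotient_scope.
Lemma measurable_invR (R : realType) : measurable_fun [set: R] (fun x : R => x^-1).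
Proof.
have -> : [set: R] = (~` [set 0]) `|` [set 0] by rewrite setvU.
have o : open (~` [set (0:R)]).
  apply: closed_openC; apply: accessible_closed_set1.
  exact/hausdorff_accessible/Rhausdorff.
apply/measurable_funU.
- exact: open_measurable.
- exact: measurable_set1.
split; last exact: measurable_fun_set1.
apply: open_continuous_measurable_fun => // x; rewrite inE /= => /eqP x0.
exact: inv_continuous.
Qed.

Section S.
Context d (Omega : measurableType d) (R : realType) (P : probability Omega R).
Local Notation L0 := (L0 P).

Lemma L0_meas (X : L0) : measurable_fun setT (X : Omega -> R).
Proof. rewrite /evL0 /aqEqMfun_to_fun. exact: measurable_funPT. Qed.

Lemma L0_ext (X Y : L0) : {ae P, forall w, X w = Y w} -> X = Y.
Proof.
move=> h; rewrite -[X]reprK -[Y]reprK; apply/eqmodP.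
by rewrite /= /ae_eq_op; apply/asboolP; apply: filterS h => w + _.
Qed.

Lemma liftL0_ae (f : Omega -> R) : measurable_fun setT f ->
  {ae P, forall w, liftL0 P f w = f w}.
Proof.
move=> mf; rewrite /liftL0 /evL0 /aqEqMfun_to_fun.
set g := insubd _ f.
have gf : (g : Omega -> R) = f by rewrite /g insubdK // inE.
have := reprK (\pi_(L0) g : L0).
move/eqP; rewrite eqmodE => /asboolP.
by rewrite gf; apply: filterS => w; apply.
Qed.

Hint Resolve L0_meas : core.

Lemma mlog (X : L0) : measurable_fun setT (fun w => ln (X w)).
Proof. exact: (measurableT_comp (@measurable_ln R)). Qed.
Lemma mexp (X : L0) : measurable_fun setT (fun w => expR (X w)).
Proof. exact: (measurableT_comp (@measurable_expR R)). Qed.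

Lemma logL0_ae (X : L0) : {ae P, forall w, logL0 X w = ln (X w)}.
Proof. exact/liftL0_ae/mlog. Qed.
Lemma expL0_ae (X : L0) : {ae P, forall w, expL0 X w = expR (X w)}.
Proof. exact/liftL0_ae/mexp. Qed.
Lemma mulL0_ae (X Y : L0) : {ae P, forall w, mulL0 X Y w = X w * Y w}.
Proof. exact/liftL0_ae/measurable_funM. Qed.
Lemma divL0_ae (X Y : L0) : {ae P, forall w, divL0 X Y w = X w / Y w}.
Proof.
apply/liftL0_ae/measurable_funM => //.
exact: (measurableT_comp (@measurable_invR R)).
Qed.
Lemma subL0_ae (X Y : L0) : {ae P, forall w, subL0 X Y w = X w - Y w}.
Proof. exact/liftL0_ae/measurable_funB. Qed.
Lemma lincombL0_ae a (X : L0) b (Y : L0) :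
  {ae P, forall w, lincombL0 a X b Y w = a * X w + b * Y w}.
Proof.
apply/liftL0_ae/measurable_funD; apply: measurable_funM => //;
exact: measurable_cst.
Qed.
Lemma powmulL0_ae (X : L0) a (Y : L0) b :
  {ae P, forall w, powmulL0 X a Y b w = X w `^ a * Y w `^ b}.
Proof.
apply/liftL0_ae/measurable_funM.
  exact: (measurableT_comp (@measurable_powR R a)).
exact: (measurableT_comp (@measurable_powR R b)).
Qed.

Lemma expK_L0 (X : L0) : L0pp X -> expL0 (logL0 X) = X.
Proof.
move=> hX; apply: L0_ext; near=> w.
rewrite (near (expL0_ae _) w) // (near (logL0_ae X) w) // lnK // posrE.
exact: (near hX w).
Unshelve. all: by end_near. Qed.

Lemma logK_L0 (Y : L0) : logL0 (expL0 Y) = Y.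
Proof.
apply: L0_ext; near=> w.
by rewrite (near (logL0_ae _) w) // (near (expL0_ae _) w) // expRK.
Unshelve. all: by end_near. Qed.

Lemma logL0_inj (X Y : L0) : L0pp X -> L0pp Y -> logL0 X = logL0 Y -> X = Y.
Proof. by move=> hX hY e; rewrite -(expK_L0 hX) -(expK_L0 hY) e. Qed.

Lemma powdiv_L0 (X Z : L0) : L0pp X -> L0pp Z ->
  powmulL0 X 1 Z (-1) = divL0 X Z.
Proof.
move=> hX hZ; apply: L0_ext; near=> w.
rewrite (near (powmulL0_ae _ _ _ _) w) // (near (divL0_ae _ _) w) //.
rewrite powRr1; last exact/ltW/(near hX w).
by rewrite powRN powRr1 //; exact/ltW/(near hZ w).
Unshelve. all: by end_near. Qed.

Lemma sublog_L0 (X Z : L0) : L0pp X -> L0pp Z ->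
  subL0 (logL0 X) (logL0 Z) = logL0 (divL0 X Z).
Proof.
move=> hX hZ; apply: L0_ext; near=> w.
rewrite (near (subL0_ae _ _) w) // (near (logL0_ae _) w) // (near (logL0_ae _) w) //.
rewrite (near (logL0_ae _) w) // (near (divL0_ae _ _) w) //.
have x0 : 0 < X w by exact: (near hX w).
have z0 : 0 < Z w by exact: (near hZ w).
by rewrite lnM ?posrE ?invr_gt0 // lnV ?posrE.
Unshelve. all: by end_near. Qed.

Lemma logmul_L0 (Z W : L0) : L0pp Z -> L0pp W ->
  {ae P, forall w, logL0 (mulL0 Z W) w = logL0 Z w + logL0 W w}.
Proof.
move=> hZ hW; near=> w.
rewrite (near (logL0_ae _) w) // (near (logL0_ae Z) w) // (near (logL0_ae W) w) //.
rewrite (near (mulL0_ae _ _) w) // lnM // posrE.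
  exact: (near hZ w).
exact: (near hW w).
Unshelve. all: by end_near. Qed.

Lemma sublogmul_L0 (Z W : L0) : L0pp Z -> L0pp W ->
  subL0 (logL0 (mulL0 Z W)) (logL0 Z) = logL0 W.
Proof.
move=> hZ hW; apply: L0_ext; near=> w.
rewrite (near (subL0_ae _ _) w) // (near (logmul_L0 hZ hW) w) //.
by rewrite addrC addKr.
Unshelve. all: by end_near. Qed.

Lemma logpowmul_L0 (X Y : L0) a b : L0pp X -> L0pp Y ->
  {ae P, forall w, logL0 (powmulL0 X a Y b) w = a * logL0 X w + b * logL0 Y w}.
Proof.
move=> hX hY; near=> w.
rewrite (near (logL0_ae _) w) // (near (logL0_ae X) w) // (near (logL0_ae Y) w) //.
have x0 : 0 < X w by exact: (near hX w).
have y0 : 0 < Y w by exact: (near hY w).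
rewrite (near (powmulL0_ae _ _ _ _) w) // lnM ?posrE ?powR_gt0 //.
by rewrite !ln_powR.
Unshelve. all: by end_near. Qed.
End S.
Section Gauge.
Context (R : realType) (V : lmodType R) (E : set V).
Hypothesis E0 : E 0.
Hypothesis Econv : forall x y (t : R), E x -> E y -> 0 <= t <= 1 ->
  E (t *: x + (1 - t) *: y).
Hypothesis Eabs : forall x, exists2 s : R, 0 < s & E (s *: x).

Definition Gset (x : V) := [set t : R | 0 < t /\ E (t^-1 *: x)].
Definition gauge (x : V) : R := inf (Gset x).

Lemma Gset_ne x : Gset x !=set0.
Proof.
have [s s0 Es] := Eabs x; exists s^-1; split; first by rewrite invr_gt0.
by rewrite invrK.
Qed.

Lemma Gset_lb x : has_lbound (Gset x).
Proof. by exists 0 => t [/ltW]. Qed.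

Lemma gauge_ge0 x : 0 <= gauge x.
Proof. by apply: lb_le_inf; [exact: Gset_ne| move=> t [/ltW]]. Qed.

Lemma gauge_le x t : Gset x t -> gauge x <= t.
Proof. by move=> h; apply: ge_inf => //; exact: Gset_lb. Qed.

Lemma gaugeE x : E x -> gauge x <= 1.
Proof. by move=> Ex; apply: gauge_le; split => //; rewrite invr1 scale1r. Qed.

Lemma gauge0 : gauge 0 = 0.
Proof.
apply/eqP; rewrite eq_le gauge_ge0 andbT.
apply/ler_addgt0Pr => e e0; rewrite add0r; apply: gauge_le.
by split => //; rewrite scaler0.
Qed.

Lemma gaugeH s x : 0 < s -> gauge (s *: x) <= s * gauge x.
Proof.
move=> s0; rewrite -ler_pdivrMl //; apply: lb_le_inf; first exact: Gset_ne.
move=> t [t0 Et]; rewrite ler_pdivrMl //; apply: gauge_le; split.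
  exact: mulr_gt0.
by rewrite scalerA invfM mulrAC mulVf ?gt_eqF // mul1r.
Qed.

Lemma gaugeA x y : gauge (x + y) <= gauge x + gauge y.
Proof.
apply/ler_addgt0Pr => e e0.
have e20 : 0 < e / 2 by rewrite divr_gt0.
have [a [a0 Ea] ha] := inf_adherent e20 (conj (Gset_ne x) (Gset_lb x)).
have [b [b0 Eb] hb] := inf_adherent e20 (conj (Gset_ne y) (Gset_lb y)).
have ab0 : 0 < a + b by rewrite addr_gt0.
apply: (@le_trans _ _ (a + b)).
  apply: gauge_le; split => //.
  have -> : (a + b)^-1 *: (x + y) =
      (a / (a + b)) *: (a^-1 *: x) + (1 - a / (a + b)) *: (b^-1 *: y).
    have -> : 1 - a / (a + b) = b / (a + b).
      by apply: (mulIf (lt0r_neq0 ab0)); rewrite mulrBl !divfK ?gt_eqF // mul1r; lra.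
    rewrite !scalerA mulrAC mulfV ?gt_eqF // mul1r mulrAC mulfV ?gt_eqF //.
    by rewrite mul1r scalerDr.
  apply: Econv => //; apply/andP; split; first by rewrite divr_ge0 // ltW.
  by rewrite ler_pdivrMr // mul1r lerDl ltW.
rewrite (splitr e) addrACA; apply: lerD; exact: ltW.
Qed.

Lemma gauge_out q : ~ E q -> 1 <= gauge q.
Proof.
move=> nEq; apply: lb_le_inf; first exact: Gset_ne.
move=> t [t0 Et]; rewrite leNgt; apply/negP => t1; apply: nEq.
have := Econv (t := t) Et E0; rewrite scaler0 addr0 scalerA mulfV ?gt_eqF //.
by rewrite scale1r; apply; rewrite ltW //= ltW.
Qed.

End Gauge.

Section HahnBanach.
Context (R : realType) (V : lmodType R) (p : V -> R) (q : V).
Hypothesis p_ge0 : forall x, 0 <= p x.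
Hypothesis p0 : p 0 = 0.
Hypothesis pH : forall s x, 0 < s -> p (s *: x) <= s * p x.
Hypothesis pA : forall x y, p (x + y) <= p x + p y.
Hypothesis pq : 1 <= p q.

Definition Good (G : set (V * R)) :=
  [/\ (forall a x y r s, G (x, r) -> G (y, s) -> G (a *: x + y, a * r + s)),
      (forall x r, G (x, r) -> r <= p x) & G (q, 1)].

Definition Good' (G : set (V * R)) := G = set0 \/ Good G.

Lemma Good'_good G z : Good' G -> G z -> Good G.
Proof. by case=> // -> . Qed.

Lemma Good00 G : Good G -> G (0, 0).
Proof.
case=> lin _ Gq; have := lin (-1) _ _ _ _ Gq Gq.
by rewrite scaleN1r addNr mulN1r addNr.
Qed.

Lemma Good_fun G x r s : Good G -> G (x, r) -> G (x, s) -> r = s.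
Proof.
move=> [lin dom _] Gr Gs.
have h1 := dom _ _ (lin (-1) _ _ _ _ Gr Gs).
have h2 := dom _ _ (lin (-1) _ _ _ _ Gs Gr).
move: h1 h2; rewrite scaleN1r addNr p0 !mulN1r; lra.
Qed.

Lemma pHinv s x : 0 < s -> s * p (s^-1 *: x) <= p x.
Proof.
move=> s0; have := @pH s^-1 x; rewrite invr_gt0 => /(_ s0) h.
rewrite -(ler_pM2l s0) in h; rewrite (le_trans h) //.
by rewrite mulrA mulfV ?gt_eqF // mul1r.
Qed.

Lemma Good_extend A y : Good A -> ~ (exists r, A (y, r)) ->
  exists B, A `<` B /\ Good B.
Proof.
move=> GA ny; have A00 := Good00 GA; case: (GA) => lin dom Aq.
pose S1 := [set a | exists x r, A (x, r) /\ a = r - p (x - y)].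
have ub x r x2 s : A (x, r) -> A (x2, s) -> r - p (x - y) <= p (x2 + y) - s.
  move=> Ax Ax2; have := dom _ _ (lin 1 _ _ _ _ Ax Ax2).
  rewrite scale1r mul1r => h.
  have := pA (x - y) (x2 + y); rewrite addrACA addNr addr0 => h2; lra.
have S1ne : S1 !=set0 by exists (0 - p (0 - y)); exists 0, 0.
have S1ub : has_ubound S1.
  by exists (p (0 + y) - 0) => _ [x [r [Ax ->]]]; exact: ub.
pose c := sup S1.
have cge x r : A (x, r) -> r - p (x - y) <= c.
  by move=> Ax; apply: ub_le_sup => //; exists x, r.
have cle x2 s : A (x2, s) -> c <= p (x2 + y) - s.
  by move=> Ax2; apply: ge_sup => // _ [x [r [Ax ->]]]; exact: ub.
pose B := [set z | exists x r t, A (x, r) /\ z = (x + t *: y, r + t * c)].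
exists B; split.
  split.
    by move=> [x r] Ax; exists x, r, 0; rewrite scale0r mul0r !addr0.
  move=> BA; apply: ny; exists c; apply: BA; exists 0, 0, 1.
  by rewrite scale1r mul1r !add0r.
split.
- move=> a _ _ _ _ [x1 [r1 [t1 [A1 [-> ->]]]]] [x2 [r2 [t2 [A2 [-> ->]]]]].
  exists (a *: x1 + x2), (a * r1 + r2), (a * t1 + t2); split; first exact: lin.
  congr (_, _).
    by rewrite scalerDr scalerA scalerDl addrACA.
  by rewrite mulrDr mulrDl mulrA addrACA.
- move=> _ _ [x [r [t [Ax [-> ->]]]]].
  have [t0|t0|->] := ltgtP t 0; last by rewrite scale0r mul0r !addr0; exact: dom.
  +
    set s := - t; have s0 : 0 < s by rewrite oppr_gt0.
    have Ax1 := lin s^-1 _ _ _ _ Ax A00; rewrite !addr0 in Ax1.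
    have h := cge _ _ Ax1.
    have := pHinv (x + t *: y) s0.
    have -> : s^-1 *: (x + t *: y) = s^-1 *: x - y.
      have ts : t = - s by rewrite /s opprK.
      rewrite scalerDr scalerA ts mulrN mulVf ?gt_eqF //.
      by rewrite scaleN1r.
    move=> h2.
    have -> : r + t * c = s * (s^-1 * r - c).
      rewrite mulrBr mulrA mulfV ?gt_eqF // mul1r /s; lra.
    apply: le_trans h2; rewrite ler_pM2l //; lra.
  +
    have Ax1 := lin t^-1 _ _ _ _ Ax A00; rewrite !addr0 in Ax1.
    have h := cle _ _ Ax1.
    have := pHinv (x + t *: y) t0.
    have -> : t^-1 *: (x + t *: y) = t^-1 *: x + y.
      by rewrite scalerDr scalerA mulVf ?gt_eqF // scale1r.
    move=> h2.
    have -> : r + t * c = t * (t^-1 * r + c).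
      by rewrite mulrDr mulrA mulfV ?gt_eqF // mul1r.
    apply: le_trans h2; rewrite ler_pM2l //; lra.
- by exists q, 1, 0; rewrite scale0r mul0r !addr0.
Qed.


Lemma Good_G0 : Good [set z | exists t, z = (t *: q, t)].
Proof.
split.
- move=> a _ _ _ _ [t1 [-> ->]] [t2 [-> ->]].
  by exists (a * t1 + t2); rewrite scalerDl scalerA.
- move=> _ _ [t [-> ->]].
  have [t0|t0] := leP t 0; first by apply: le_trans t0 (p_ge0 _).
  have := pHinv (t *: q) t0; rewrite scalerA mulVf ?gt_eqF // scale1r => h.
  apply: le_trans h; rewrite -{1}[t]mulr1 ler_pM2l //.
- by exists 1; rewrite scale1r.
Qed.

Lemma HB_exists : exists F : V -> R,
  [/\ forall a x y, F (a *: x + y) = a * F x + F y,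
      forall x, F x <= p x & F q = 1].
Proof.
have [A [GA' Amax]] : exists A, Good' A /\ forall B, A `<` B -> ~ Good' B.
  apply: Zorn_bigcup => F0 FG tot.
  have [[G0 [FG0 [z G0z]]]|nF] :=
    pselect (exists G, F0 G /\ G !=set0); last first.
    left; apply/seteqP; split => // z [G FGG Gz]; apply: nF; exists G; split => //.
    by exists z.
  right; split.
  - move=> a x y r s [G1 FG1 G1r] [G2 FG2 G2s].
    have [G12|G21] := tot _ _ FG1 FG2.
    + have [lin _ _] := Good'_good (FG _ FG2) G2s.
      by exists G2 => //; apply: lin => //; exact: G12.
    + have [lin _ _] := Good'_good (FG _ FG1) G1r.
      by exists G1 => //; apply: lin => //; exact: G21.
  - move=> x r [G1 FG1 G1r].
    by have [_ dom _] := Good'_good (FG _ FG1) G1r; exact: dom.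
  - by have [_ _ Gq] := Good'_good (FG _ FG0) G0z; exists G0.
have GA : Good A.
  case: GA' => // A0; exfalso; apply: (Amax _ _ (or_intror Good_G0)).
  rewrite A0; split => // sub.
  have := sub (q, 1); rewrite /set0 /=; apply; exists 1; by rewrite scale1r.
have tot y : exists r, A (y, r).
  apply: contrapT => ny.
  have [B [AB GB]] := Good_extend GA ny.
  exact: (Amax _ AB (or_intror GB)).
pose F v := xget 0 [set r | A (v, r)].
have AF v : A (v, F v) by rewrite /F; apply: (@xgetPex _ 0 [set r | A (v, r)]); exact: tot.
case: (GA) => lin dom Aq.
exists F; split.
- move=> a x y; apply: (Good_fun GA (AF _)); exact: lin.
- by move=> x; exact: dom.
- exact: (Good_fun GA (AF _)).
Qed.

End HahnBanach.
Section T.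
Context (R : realType) (V : tvsType R).
Lemma scalel_continuous (a : R) : continuous (fun u : V => a *: u).
Proof.
move=> x.
have := (@continuous_comp _ _ _ (fun u : V => ((a : R^o), u)) (fun z : R^o * V => z.1 *: z.2) x).
apply.
  apply: (@cvg_pair _ _ _ (nbhs x) (nbhs (a : R^o)) (nbhs x)) => /=; [exact: cvg_cst|exact: cvg_id].
exact: scale_continuous.
Qed.
Lemma affine_continuous (a : R) (b : V) : continuous (fun u : V => a *: u + b).
Proof.
move=> x.
apply: (@continuous_comp _ _ _ (fun u : V => (a *: u, b)) (fun z : V * V => z.1 + z.2)).
  by apply: cvg_pair => /=; [exact: scalel_continuous|exact: cvg_cst].
exact: add_continuous.
Qed.
Lemma scal_continuous (x : V) : continuous (fun t : R^o => t *: x).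
Proof.
move=> t.
apply: (@continuous_comp _ _ _ (fun s : R^o => (s, x)) (fun z : R^o * V => z.1 *: z.2)).
  by apply: (@cvg_pair _ _ _ (nbhs t) (nbhs t) (nbhs x)) => /=; [exact: cvg_id|exact: cvg_cst].
exact: scale_continuous.
Qed.

Lemma absorbing (N : set V) : nbhs 0 N -> forall x, exists2 s : R, 0 < s & N (s *: x).
Proof.
move=> hN x.
have hN' : nbhs (0 *: x) N by rewrite scale0r.
have := @scal_continuous x 0 _ hN'.
move=> h; have h2 : nbhs (0:R^o) [set t : R^o | N (t *: x)] := h.
have [d he] := nbhs_ex h2.
have e0 : 0 < d%:num by [].
exists (d%:num / 2); first by rewrite divr_gt0.
apply: he; rewrite /ball /= sub0r normrN gtr0_norm ?divr_gt0 //.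
by rewrite ltr_pdivrMr // ltr_pMr // ltr1n.
Qed.

Lemma combo3 (a b : R) (x1 y1 z x2 y2 : V) : a + b = 1 ->
  a *: (x1 - y1 - z) + b *: (x2 - y2 - z) = (a *: x1 + b *: x2) - (a *: y1 + b *: y2) - z.
Proof.
move=> ab; rewrite !scalerBr -[z in RHS]scale1r -ab scalerDl.
by rewrite addrACA [X in X + _ = _]addrACA -!opprD.
Qed.

Lemma linF_props (F : V -> R) : (forall a x y, F (a *: x + y) = a * F x + F y) ->
  [/\ F 0 = 0, (forall x y, F (x + y) = F x + F y), (forall a x, F (a *: x) = a * F x)
    & (forall x y, F (x - y) = F x - F y)].
Proof.
move=> lin.
have F0 : F 0 = 0.
  have := lin (-1) 0 0; rewrite scaler0 addr0 mulN1r addNr; by [].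
have FD x y : F (x + y) = F x + F y by rewrite -[x]scale1r lin mul1r scale1r.
have FZ a x : F (a *: x) = a * F x by rewrite -[a *: x]addr0 lin F0 addr0.
split => // x y; by rewrite FD -scaleN1r FZ mulN1r.
Qed.

Lemma separation (L : set V) (v0 : V) :
  (forall x y (t : R), L x -> L y -> 0 <= t <= 1 -> L (t *: x + (1 - t) *: y)) ->
  nbhs v0 (~` L) ->
  exists psi : V -> R, [/\ (forall a u v, psi (a *: u + v) = a * psi u + psi v),
    continuous psi & forall v, L v -> psi v < psi v0].
Proof.
move=> Lconv hv0.
have [[l0 Ll0]|L0] := pselect (L !=set0); last first.
  exists (fun=> 0); split.
  - by move=> *; rewrite mulr0 addr0.
  - by move=> x; exact: cvg_cst.
  - by move=> v Lv; exfalso; apply: L0; exists v.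
have [B Bconv [Bopen Bbasis]] := @locally_convex R V.
have [U [BU Uv0] UL] := Bbasis v0 _ hv0.
have Uc : convex_set U := Bconv U (mem_set BU).
have nU : nbhs v0 U by apply: open_nbhs_nbhs; split => //; exact: Bopen.
pose N := [set u | U (v0 + u)].
have nN : nbhs 0 N.
  have : nbhs (1 *: 0 + v0) U by rewrite scaler0 add0r.
  move=> /(@affine_continuous 1 v0 0) h.
  have h2 : nbhs (0:V) [set u | U (1 *: u + v0)] := h.
  suff -> : N = [set u | U (1 *: u + v0)] by [].
  by apply/funext => u; rewrite /N /= scale1r addrC.
have N0 : N 0 by rewrite /N /= addr0.
have Nconv u1 u2 (t : R) : N u1 -> N u2 -> 0 <= t <= 1 -> N (t *: u1 + (1 - t) *: u2).
  move=> N1 N2 /andP[t0 t1].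
  have := Uc _ _ (Itv01 t0 t1) (mem_set N1) (mem_set N2).
  rewrite inE /= /N /conv /= /unstable.onem.
  have tt : t + (1 - t) = 1 by rewrite addrC subrK.
  by rewrite !scalerDr addrACA -scalerDl tt scale1r.
pose E := [set z | exists l u, [/\ L l, N u & z = l - u - l0]].
have E0 : E 0 by exists l0, 0; split => //; rewrite subr0 subrr.
have Econv x y (t : R) : E x -> E y -> 0 <= t <= 1 -> E (t *: x + (1 - t) *: y).
  move=> [l1 [u1 [L1 N1 ->]]] [l2 [u2 [L2 N2 ->]]] ht.
  exists (t *: l1 + (1 - t) *: l2), (t *: u1 + (1 - t) *: u2); split.
  - exact: Lconv.
  - exact: Nconv.
  - by rewrite combo3 // addrC subrK.
have Eabs x : exists2 s : R, 0 < s & E (s *: x).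
  have [s s0 Ns] := absorbing nN (- x); exists s => //.
  exists l0, (s *: - x); split => //.
  by rewrite scalerN opprK addrAC subrr add0r.
pose q := v0 - l0.
have nEq : ~ E q.
  move=> [l [u [Ll Nu]]] /eqP; rewrite /q subr_eq subrK => /eqP e.
  have : U (v0 + u) := Nu.
  by rewrite e subrK => Ul; exact: UL Ul Ll.
have [F [lin Fp Fq]] := HB_exists (@gauge_ge0 _ _ E Eabs) (gauge0 E0 Eabs)
  (@gaugeH _ _ E Eabs) (gaugeA Econv Eabs) (gauge_out E0 Econv Eabs nEq).
have [F0 FD FZ FB] := linF_props lin.
have FE z : E z -> F z <= 1 by move=> Ez; apply: le_trans (Fp z) (gaugeE Ez).
have FN u : N u -> - F u <= 1.
  move=> Nu; have -> : - F u = F (- u) by rewrite -[- u]scaleN1r FZ mulN1r.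
  by apply: FE; exists l0, u; split => //; rewrite addrAC subrr add0r.
exists F; split => //.
- move=> x; apply/cvgrPdist_lt => e e0.
  have d0 : 0 < e / 2 by rewrite divr_gt0.
  set d := e / 2.
  have n1 : nbhs x [set y | N (d^-1 *: y + (- (d^-1 *: x)))].
    have : nbhs (d^-1 *: x + - (d^-1 *: x)) N by rewrite subrr.
    exact: (@affine_continuous d^-1 (- (d^-1 *: x)) x).
  have n2 : nbhs x [set y | N ((- d^-1) *: y + d^-1 *: x)].
    have : nbhs ((- d^-1) *: x + d^-1 *: x) N by rewrite scaleNr addNr.
    exact: (@affine_continuous (- d^-1) (d^-1 *: x) x).
  have de : d < e by rewrite /d ltr_pdivrMr // ltr_pMr // ltr1n.
  near=> y.
  have h1 : - F (d^-1 *: y + - (d^-1 *: x)) <= 1 by apply: FN; near: y; exact: n1.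
  have h2 : - F ((- d^-1) *: y + d^-1 *: x) <= 1 by apply: FN; near: y; exact: n2.
  rewrite FB !FZ -mulrBr -mulrN -(ler_pM2l d0) mulrA mulfV ?gt_eqF // mul1r mulr1 in h1.
  rewrite FD !FZ mulNr addrC -mulrBr -mulrN -(ler_pM2l d0) mulrA mulfV ?gt_eqF // mul1r mulr1 in h2.
  rewrite ltr_norml; apply/andP; split; lra.
- move=> v Lv.
  have [s s0 Ns] := absorbing nN (- q).
  have hE : E (v - s *: - q - l0) by exists v, (s *: - q).
  have := FE _ hE; rewrite !FB FZ.
  have Fq' : F (- q) = -1 by rewrite -[- q]scaleN1r FZ Fq mulr1.
  have Fq2 : F v0 - F l0 = 1 by rewrite -FB.
  rewrite Fq'; lra.
Unshelve. all: by end_near.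
Qed.
End T.

Lemma ereal_le_by_real (R : realType) (a b : \bar R) :
  (forall m : R, (m%:E < a)%E -> (m%:E <= b)%E) -> (a <= b)%E.
Proof.
case: a => [r| |] h; last by rewrite leNye.
- case: b h => [s| |] h; last first.
  + by have := h (r - 1); rewrite lte_fin leeNy_eq /= => /(_ ltac:(lra)).
  + by rewrite leey.
  + rewrite lee_fin leNgt; apply/negP => sr.
    have := h ((s + r) / 2); rewrite !lte_fin !lee_fin => /(_ ltac:(lra)); lra.
- case: b h => [s| |] h //.
  + have := h (s + 1); clear h; rewrite lee_fin ltry => /(_ isT) h1; exfalso; lra.
  + by have := h 0; rewrite ltry leeNy_eq /= => /(_ isT).
Qed.

Lemma ereal_dense (R : realType) (x : R) (a : \bar R) :
  (x%:E < a)%E -> exists2 y : R, x < y & (y%:E < a)%E.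
Proof.
case: a => [r| |] //.
- rewrite lte_fin => xr; exists ((x + r) / 2); rewrite ?lte_fin; lra.
- by move=> _; exists (x + 1); [lra | rewrite ltry].
Qed.

Lemma main (d : measure_display) (Omega : measurableType d)
  (R : realType) (P : probability Omega R)
  (C S K : set (L0 P)) (pi : L0 P -> R)
  (V : tvsType R) (iota : V -> L0 P) (rt : L0 P -> R) :
  setting C S K pi ->
  log_topology C iota ->
  RRM K rt ->
  quasi_convex_on (logset C) (rhoA K rt S pi) ->
  lower_semicontinuous (fun v : V => rhoA K rt S pi (iota v)) ->
  forall X : L0 P, C X ->
    MARRM S pi K rt X =
    ereal_sup [set ereal_inf
                 [set (pi Z)%:E | Z in
                    [set Z | S Z /\
                       exists W, Bset K rt W /\ phi X - phi Z <= phi W]]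
              | phi in Dset C iota].
Proof.
move=> [[Cne Sne Kne] [CL SL KL] CSK [Kcone Cgrp KC SC] pipos].
move=> [iota_inj iota_range iota_lin] [LinfK rtpos rthom rtmono rt1] qc lsc X CX.
have [C1 Cmul Cinv] := Cgrp.
have iota_ae a u v : {ae P, forall w, iota (a *: u + v) w = a * iota u w + iota v w}.
  rewrite iota_lin; apply: filterS (lincombL0_ae a (iota u) 1 (iota v)) => w ->.
  by rewrite mul1r.
have iota0_ae : {ae P, forall w, iota 0 w = 0}.
  have e : iota 0 = iota ((-1) *: 0 + 0) by rewrite scaler0 addr0.
  rewrite e; apply: filterS (iota_ae (-1) 0 0) => w ->.
  by rewrite mulN1r addNr.
have iota_comb a b u v :
    {ae P, forall w, iota (a *: u + b *: v) w = a * iota u w + b * iota v w}.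
  have e : iota (b *: v) = iota (b *: v + 0) by rewrite addr0.
  near=> w.
  rewrite (near (iota_ae a u (b *: v)) w) // e (near (iota_ae b v 0) w) //.
  by rewrite (near iota0_ae w) // addr0.
have inC Y : C Y -> range iota (logL0 Y).
  by move=> CY; rewrite iota_range; exists Y.
pose vof (Y : L0 P) := xget 0 [set v | iota v = logL0 Y].
have vofP Y : C Y -> iota (vof Y) = logL0 Y.
  move=> /inC [v _ e]; rewrite /vof.
  by apply: (@xgetPex _ 0 [set v | iota v = logL0 Y]); exists v.
have vof_eq Y v : iota v = logL0 Y -> vof Y = v.
  move=> e; apply: iota_inj; rewrite e /vof.
  by apply: (@xgetPex _ 0 [set v | iota v = logL0 Y]); exists v.
have [v0 _ iv0] := inC X CX.
have rho_le Z W : S Z -> K W -> rt W <= 1 ->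
    (rhoA K rt S pi (logL0 (mulL0 Z W)) <= (ln (pi Z))%:E)%E.
  move=> SZ KW rW; apply: ge_ereal_inf; exists (pilog pi (logL0 Z))%:E.
    exists (logL0 Z) => //; split; first by exists Z.
    rewrite (sublogmul_L0 (SL _ SZ) (KL _ KW)); split; first by exists W.
    by rewrite /nu (expK_L0 (KL _ KW)) ln_le0.
  by rewrite /pilog (expK_L0 (SL _ SZ)).
apply/le_anti/andP; split; last first.
  apply: ge_ereal_sup => _ [phi [phiLL _] <-].
  apply: ereal_inf_le_tmp => _ [Z [SZ BZ] <-]; exists Z => //; split => //.
  exists (divL0 X Z); split => //.
  by rewrite -(powdiv_L0 (CL _ CX) (SL _ SZ)) (phiLL _ _ _ _ CX (SC _ SZ)) mul1r mulN1r.
apply: ereal_le_by_real => m hm.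
have [m0|m0] := leP m 0.
  apply: le_ereal_sup_tmp.
  exists (ereal_inf [set (pi Z)%:E | Z in [set Z | S Z /\
      exists W, Bset K rt W /\ (fun=> 0 : R) X - (fun=> 0 : R) Z <= (fun=> 0 : R) W]]).
    exists (fun=> 0) => //; split.
      by move=> *; rewrite !mulr0 addr0.
    by move=> x; exact: cvg_cst.
  apply: le_ereal_inf_tmp => _ [Z [SZ _] <-]; rewrite lee_fin.
  by apply: le_trans m0 _; exact/ltW/pipos.
have [m' mm' hm'] := ereal_dense hm.
pose Lset := [set v : V | (rhoA K rt S pi (iota v) <= (ln m)%:E)%E].
have Lconv x y (t : R) : Lset x -> Lset y -> 0 <= t <= 1 -> Lset (t *: x + (1 - t) *: y).
  move=> Lx Ly ht; rewrite /Lset /=.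
  have -> : iota (t *: x + (1 - t) *: y) = lincombL0 t (iota x) (1 - t) (iota y).
    apply: L0_ext; near=> w.
    by rewrite (near (iota_comb t (1 - t) x y) w) // (near (lincombL0_ae _ _ _ _) w).
  apply: le_trans (qc _ _ _ _ _ ht) _.
  - by rewrite -iota_range; exists x.
  - by rewrite -iota_range; exists y.
  by rewrite ge_max; apply/andP; split; [exact: Lx|exact: Ly].
have nL : ~ Lset v0.
  rewrite /Lset /= iv0 => hr.
  have : (rhoA K rt S pi (logL0 X) < (ln m')%:E)%E.
    have m'0 : 0 < m' := lt_trans m0 mm'.
    by apply: le_lt_trans hr _; rewrite lte_fin ltr_ln ?posrE.
  move=> /ereal_inf_lt [_ [L [[Z SZ <-] [[K' KK' eK'] hnu]] <-]].
  rewrite lte_fin /pilog (expK_L0 (SL _ SZ)) => hZ.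
  have Xpp := CL X CX; have Zpp := SL Z SZ.
  have dK : K (divL0 X Z) by exact: CSK.
  rewrite sublog_L0 // in eK' hnu.
  have e : K' = divL0 X Z by apply: logL0_inj => //; exact: KL.
  rewrite e in KK'.
  rewrite /nu (expK_L0 (KL _ dK)) in hnu.
  have rle : rt (divL0 X Z) <= 1.
    by rewrite -ler_ln ?posrE ?rtpos // ln1.
  have : (MARRM S pi K rt X <= (pi Z)%:E)%E.
    by apply: ereal_inf_lbound; exists Z.
  move=> hM; have := lt_le_trans hm' hM; rewrite lte_fin.
  have m'0 : 0 < m' := lt_trans m0 mm'.
  move: hZ; rewrite ltr_ln ?posrE ?pipos // => h h2.
  by have := lt_trans h h2; rewrite ltxx.
have nv0 : nbhs v0 (~` Lset).
  have : ((ln m)%:E < rhoA K rt S pi (iota v0))%E by rewrite ltNge; apply/negP.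
  move=> /(lsc v0) [V0 nV0 hV0]; apply: filterS nV0 => y /hV0 h.
  by rewrite /Lset /= leNgt h.
have [psi [lin cont sep]] := separation Lconv nv0.
have [psi0 psiD psiZ psiB] := linF_props lin.
pose phi (Y : L0 P) := psi (vof Y).
have phiD : Dset C iota phi.
  split.
  - move=> Y1 Y2 a b CY1 CY2; rewrite /phi.
    rewrite (@vof_eq _ (a *: vof Y1 + b *: vof Y2)) ?psiD ?psiZ //.
    apply: L0_ext; near=> w.
    rewrite (near (iota_comb _ _ _ _) w) // !vofP //.
    by rewrite (near (logpowmul_L0 _ _ (CL _ CY1) (CL _ CY2)) w).
  - suff -> : (fun v : V => phi (expL0 (iota v))) = psi by [].
    by apply/funext => v; rewrite /phi (@vof_eq _ v) // logK_L0.
apply: le_ereal_sup_tmp; eexists; first by exists phi.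
apply: le_ereal_inf_tmp => _ [Z [SZ [W [[KW rW] hphi]]] <-]; rewrite lee_fin.
have CZ := SC Z SZ; have CW := KC W KW.
have Zpp := SL Z SZ; have Wpp := KL W KW.
have e : iota (vof Z + vof W) = logL0 (mulL0 Z W).
  apply: L0_ext; near=> w.
  rewrite -[vof Z]scale1r (near (iota_ae _ _ _) w) // !vofP // mul1r.
  by rewrite (near (logmul_L0 Zpp Wpp) w).
have nLv : ~ Lset (vof Z + vof W).
  move=> Lv; have := sep _ Lv; rewrite psiD.
  have : psi v0 = phi X by rewrite /phi (@vof_eq _ v0).
  rewrite /phi in hphi * => hX hs; clear -hphi hX hs; lra.
rewrite /Lset /= e in nLv.
have := rho_le _ _ SZ KW rW.
move: nLv; rewrite leNgt => /negP/negbNE h1 h2.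
have := lt_le_trans h1 h2; rewrite lte_fin ltr_ln ?posrE ?pipos // => /ltW //.
Unshelve. all: by end_near.
Qed.
End Helpers.

Theorem mainTheorem15 (d : measure_display) (Omega : measurableType d)
  (R : realType) (P : probability Omega R)
  (C S K : set (L0 P)) (pi : L0 P -> R)
  (V : tvsType R) (iota : V -> L0 P) (rt : L0 P -> R) :
  setting C S K pi ->
  log_topology C iota ->
  RRM K rt ->
  quasi_convex_on (logset C) (rhoA K rt S pi) ->
  lower_semicontinuous (fun v : V => rhoA K rt S pi (iota v)) ->
  forall X : L0 P, C X ->
    MARRM S pi K rt X =
    ereal_sup [set ereal_inf
                 [set (pi Z)%:E | Z in
                    [set Z | S Z /\
                       exists W, Bset K rt W /\ phi X - phi Z <= phi W]]
              | phi in Dset C iota].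
Proof. exact: Helpers.main. Qed.
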